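(* Let $K,G,\eta,\bar\eta,\xi,c_0>0$ and let $H:\mathbb R_+\to\mathbb R_+$ be nondecreasing, strongly semismooth, with $H(0)=0$. Let $f(\boldsymbol\sigma,\kappa)=\hat f(p(\boldsymbol\sigma),\varrho(\boldsymbol\sigma),\kappa)=\sqrt{\tfrac12}\varrho(\boldsymbol\sigma)+\eta p(\boldsymbol\sigma)-\xi(c_0+\kappa)$. Let $\boldsymbol\sigma^{tr}\in\mathbb R^{3\times3}_{sym}$, $\bar\varepsilon^{p,tr}\ge0$ be given, $p^{tr}=p(\boldsymbol\sigma^{tr})$, $\varrho^{tr}=\varrho(\boldsymbol\sigma^{tr})$, and define for $\gamma\ge0$ $$q_{tr}(\gamma)=\sqrt{\tfrac12}\big(\varrho^{tr}-\gamma G\sqrt2\big)^++\eta(p^{tr}-\gamma K\bar\eta)-\xi\big(c_0+H(\bar\varepsilon^{p,tr}+\gamma\xi)\big).$$ Assume $f(\boldsymbol\sigma^{tr},H(\bar\varepsilon^{p,tr}))>0$. Then there exists a unique $\triangle\lambda>0$ with $q_{tr}(\triangle\lambda)=0$. Furthermore, each of the following problems has a unique solution: (R) find $(p,\varrho,\bar\varepsilon^p,\triangle\lambda)$ with $p=p^{tr}-\triangle\lambda K\bar\eta$, $\varrho=(\varrho^{tr}-\triangle\lambda G\sqrt2)^+$, $\bar\varepsilon^p=\bar\varepsilon^{p,tr}+\triangle\lambda\xi$, $\hat f(p,\varrho,H(\bar\varepsilon^p))=0$; (P) find $(\boldsymbol\sigma,\bar\varepsilon^p,\triangle\lambda)$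 with $\boldsymbol\sigma=\boldsymbol\sigma^{tr}-\triangle\lambda(G\sqrt2\hat{\mathbf n}+K\bar\eta\mathbf I)$ for some $\hat{\mathbf n}\in\partial\varrho(\boldsymbol\sigma)$, $\bar\varepsilon^p=\bar\varepsilon^{p,tr}+\triangle\lambda\xi$, $f(\boldsymbol\sigma,H(\bar\varepsilon^p))=0$; (Q) find $(\boldsymbol\sigma,\bar\varepsilon^p,\triangle\lambda)$ with the same two equations as in (P) and $\triangle\lambda\ge0$, $f(\boldsymbol\sigma,H(\bar\varepsilon^p))\le0$, $\triangle\lambda f(\boldsymbol\sigma,H(\bar\varepsilon^p))=0$. In addition, if $q_{tr}(\varrho^{tr}/(G\sqrt2))<0$ then $\triangle\lambda\in(0,\varrho^{tr}/(G\sqrt2))$ and $\varrho>0$; conversely, if $q_{tr}(\varrho^{tr}/(G\sqrt2))\ge0$ then $\triangle\lambda\ge\varrho^{tr}/(G\sqrt2)$ and $\varrho=0$ (where $\varrho$ is the corresponding component of the solution of (R)).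
   Context: $\mathbb R^{3\times3}_{sym}$: real symmetric $3\times3$ matrices with Frobenius product '':'' and norm; $\mathbf I$ identity; $p(\boldsymbol\sigma)=\frac13\mathbf I:\boldsymbol\sigma$, $\mathbf s(\boldsymbol\sigma)=\boldsymbol\sigma-p(\boldsymbol\sigma)\mathbf I$, $\varrho(\boldsymbol\sigma)=\|\mathbf s(\boldsymbol\sigma)\|$; $(x)^+=\max\{0,x\}$. $\partial\varrho(\boldsymbol\sigma)=\{\mathbf s(\boldsymbol\sigma)/\varrho(\boldsymbol\sigma)\}$ if $\varrho(\boldsymbol\sigma)>0$, and $\{\hat{\mathbf n}\in\mathbb R^{3\times3}_{sym}:\mathbf I:\hat{\mathbf n}=0,\|\hat{\mathbf n}\|\le1\}$ if $\varrho(\boldsymbol\sigma)=0$. Strong semismoothness: local Lipschitz continuity, directional differentiability, and $F(x+h)-F(x)-Vh=O(\|h\|^2)$ for all $V\in\partial F(x+h)$ (Clarke generalized Jacobian) as $h\to0$. *)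

(* Defs.v *)
From HB Require Import structures.
From mathcomp Require Import all_boot all_order all_algebra.
From mathcomp Require Import all_classical all_reals all_analysis.
Set Implicit Arguments. Unset Strict Implicit. Unset Printing Implicit Defensive.
Import Order.TTheory GRing.Theory Num.Theory.
Import numFieldNormedType.Exports.
Local Open Scope classical_set_scope.
Local Open Scope ring_scope.

Section Defs.
Variable R : realType.

Definition sym3 (A : 'M[R]_3) : Prop := A^T = A.

Definition frob_dot (A B : 'M[R]_3) : R := \sum_(i < 3) \sum_(j < 3) A i j * B i j.
Definition frob_norm (A : 'M[R]_3) : R := Num.sqrt (frob_dot A A).

Definition Id3 : 'M[R]_3 := 1%:M.

Definition pmean (A : 'M[R]_3) : R := 3^-1 * frob_dot Id3 A.
Definition dev (A : 'M[R]_3) : 'M[R]_3 := A - pmean A *: Id3.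
Definition rho (A : 'M[R]_3) : R := frob_norm (dev A).

Definition subdiff_rho (A : 'M[R]_3) : set 'M[R]_3 :=
  [set n | (0 < rho A /\ n = (rho A)^-1 *: dev A) \/
           (rho A = 0 /\ sym3 n /\ frob_dot Id3 n = 0 /\ frob_norm n <= 1)].

Definition ppart (x : R) : R := Num.max 0 x.

Definition fhat (eta xi c0 p r k : R) : R :=
  Num.sqrt (2^-1) * r + eta * p - xi * (c0 + k).
Definition fyield (eta xi c0 : R) (sigma : 'M[R]_3) (k : R) : R :=
  fhat eta xi c0 (pmean sigma) (rho sigma) k.

Definition qtr (K G eta etab xi c0 : R) (H : R -> R) (sigtr : 'M[R]_3) (epstr gam : R) : R :=
  Num.sqrt (2^-1) * ppart (rho sigtr - gam * G * Num.sqrt 2)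
  + eta * (pmean sigtr - gam * K * etab)
  - xi * (c0 + H (epstr + gam * xi)).

(** Strong semismoothness of a scalar function H defined on R_+ = [0, +oo).
    Only the values of H on [0, +oo) are used. *)
Definition nonneg_set : set R := [set x | 0 <= x].

Definition loc_lipschitz_on (D : set R) (H : R -> R) : Prop :=
  forall x, D x -> exists L d : R, 0 < d /\
    forall y z, D y -> D z -> `|y - x| < d -> `|z - x| < d ->
      `|H y - H z| <= L * `|y - z|.

Definition dir_diff_nonneg (H : R -> R) (x : R) : Prop :=
  forall d : R, (0 < x \/ 0 <= d) ->
    exists l : R, (fun t : R => (H (x + t * d) - H x) / t) @ 0^'+ --> l.

Definition bsubdiff (H : R -> R) (x : R) : set R :=
  [set v | exists u : nat -> R,
     (forall k, 0 < u k /\ derivable H (u k) 1) /\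
     u @ \oo --> x /\ (fun k => 'D_1 H (u k)) @ \oo --> v].

(** Clarke generalized Jacobian = convex hull of the B-subdifferential
    (in dimension one: all points between two points of it) *)
Definition clarke (H : R -> R) (x : R) : set R :=
  [set v | exists a b, bsubdiff H x a /\ bsubdiff H x b /\ a <= v /\ v <= b].

Definition strongly_semismooth_nonneg (H : R -> R) : Prop :=
  loc_lipschitz_on nonneg_set H /\
  forall x, 0 <= x ->
    dir_diff_nonneg H x /\
    exists C d : R, 0 < d /\
      forall h, 0 <= x + h -> `|h| < d ->
        forall V, clarke H (x + h) V ->
          `|H (x + h) - H x - V * h| <= C * h ^+ 2.

Definition probR (K G eta etab xi c0 : R) (H : R -> R) (sigtr : 'M[R]_3) (epstr : R)
  (p r e dl : R) : Prop :=
  0 <= dl /\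
  p = pmean sigtr - dl * K * etab /\
  r = ppart (rho sigtr - dl * G * Num.sqrt 2) /\
  e = epstr + dl * xi /\
  fhat eta xi c0 p r (H e) = 0.

Definition probP (K G eta etab xi c0 : R) (H : R -> R) (sigtr : 'M[R]_3) (epstr : R)
  (sigma : 'M[R]_3) (e dl : R) : Prop :=
  0 <= dl /\ sym3 sigma /\
  (exists n, subdiff_rho sigma n /\
     sigma = sigtr - dl *: ((G * Num.sqrt 2) *: n + (K * etab) *: Id3)) /\
  e = epstr + dl * xi /\
  fyield eta xi c0 sigma (H e) = 0.

Definition probQ (K G eta etab xi c0 : R) (H : R -> R) (sigtr : 'M[R]_3) (epstr : R)
  (sigma : 'M[R]_3) (e dl : R) : Prop :=
  sym3 sigma /\
  (exists n, subdiff_rho sigma n /\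
     sigma = sigtr - dl *: ((G * Num.sqrt 2) *: n + (K * etab) *: Id3)) /\
  e = epstr + dl * xi /\
  0 <= dl /\ fyield eta xi c0 sigma (H e) <= 0 /\
  dl * fyield eta xi c0 sigma (H e) = 0.

End Defs.

(* Main.v *)
Require Import Defs.
From HB Require Import structures.
From mathcomp Require Import all_boot all_order all_algebra.
From mathcomp Require Import all_classical all_reals all_analysis.
Import Order.TTheory GRing.Theory Num.Theory.
Import numFieldNormedType.Exports.
Local Open Scope classical_set_scope.
Local Open Scope ring_scope.
From mathcomp Require Import ring lra.

Lemma frobI (R : realType) (A : 'M[R]_3) :
  frob_dot (Id3 R) A = A 0 0 + A 1 1 + A 2%:R 2%:R.
Proof.
rewrite /frob_dot /Id3 !big_ord_recr !big_ord0 /= !mxE /=.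
rewrite !mul0r !mul1r !add0r !addr0.
by congr (_ + _ + _); congr (A _ _); apply/val_inj.
Qed.

Lemma frob_ge0 (R : realType) (A : 'M[R]_3) : 0 <= frob_dot A A.
Proof. by apply: sumr_ge0 => i _; apply: sumr_ge0 => j _; rewrite -expr2 sqr_ge0. Qed.

Lemma frobZZ (R : realType) (c : R) (A : 'M[R]_3) :
  frob_dot (c *: A) (c *: A) = c ^+ 2 * frob_dot A A.
Proof.
rewrite /frob_dot mulr_sumr; apply: eq_bigr => i _; rewrite mulr_sumr.
by apply: eq_bigr => j _; rewrite !mxE; ring.
Qed.

Lemma normZ (R : realType) (c : R) (A : 'M[R]_3) :
  frob_norm (c *: A) = `|c| * frob_norm A.
Proof. by rewrite /frob_norm frobZZ sqrtrM ?sqr_ge0 // sqrtr_sqr. Qed.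

Lemma norm_ge0 (R : realType) (A : 'M[R]_3) : 0 <= frob_norm A.
Proof. exact: sqrtr_ge0. Qed.

Lemma norm0_eq (R : realType) (A : 'M[R]_3) : frob_norm A = 0 -> A = 0.
Proof.
move=> h; have h0 : frob_dot A A = 0.
  apply/eqP; rewrite eq_le frob_ge0 andbT -sqrtr_eq0; exact/eqP.
apply/matrixP => i j; rewrite mxE; apply/eqP; rewrite -sqrf_eq0 expr2; apply/eqP.
have hr : forall i0 : 'I_3, true -> 0 <= \sum_(j0 < 3) A i0 j0 * A i0 j0.
  by move=> i0 _; apply: sumr_ge0 => j0 _; rewrite -expr2 sqr_ge0.
have hi := psumr_eq0P hr h0 (i := i) isT.
have hc : forall j0 : 'I_3, true -> 0 <= A i j0 * A i j0.
  by move=> j0 _; rewrite -expr2 sqr_ge0.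
exact: (psumr_eq0P hc hi (i := j) isT).
Qed.

Lemma pmeanE (R : realType) (A : 'M[R]_3) : pmean A = 3^-1 * (A 0 0 + A 1 1 + A 2%:R 2%:R).
Proof. by rewrite /pmean frobI. Qed.

Lemma pmeanD (R : realType) (A B : 'M[R]_3) : pmean (A + B) = pmean A + pmean B.
Proof. rewrite !pmeanE !mxE; ring. Qed.
Lemma pmeanN (R : realType) (A : 'M[R]_3) : pmean (- A) = - pmean A.
Proof. rewrite !pmeanE !mxE; ring. Qed.
Lemma pmeanB (R : realType) (A B : 'M[R]_3) : pmean (A - B) = pmean A - pmean B.
Proof. by rewrite pmeanD pmeanN. Qed.
Lemma pmeanZ (R : realType) (c : R) (A : 'M[R]_3) : pmean (c *: A) = c * pmean A.
Proof. rewrite !pmeanE !mxE; ring. Qed.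
Lemma pmeanI (R : realType) : pmean (Id3 R) = 1.
Proof. by rewrite pmeanE /Id3 !mxE /=; field. Qed.

Lemma pmean_dev (R : realType) (A : 'M[R]_3) : pmean (dev A) = 0.
Proof. by rewrite /dev pmeanB pmeanZ pmeanI mulr1 subrr. Qed.

Lemma devB (R : realType) (A B : 'M[R]_3) : dev (A - B) = dev A - dev B.
Proof. apply/matrixP => i j; rewrite /dev !mxE pmeanB; ring. Qed.
Lemma devD (R : realType) (A B : 'M[R]_3) : dev (A + B) = dev A + dev B.
Proof. apply/matrixP => i j; rewrite /dev !mxE pmeanD; ring. Qed.
Lemma devZ (R : realType) (c : R) (A : 'M[R]_3) : dev (c *: A) = c *: dev A.
Proof. apply/matrixP => i j; rewrite /dev !mxE pmeanZ; ring. Qed.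
Lemma devI (R : realType) : dev (Id3 R) = 0.
Proof. by rewrite /dev pmeanI scale1r subrr. Qed.
Lemma dev0p (R : realType) (A : 'M[R]_3) : pmean A = 0 -> dev A = A.
Proof. by move=> h; rewrite /dev h scale0r subr0. Qed.
Lemma decomp (R : realType) (A : 'M[R]_3) : A = pmean A *: Id3 R + dev A.
Proof. by rewrite /dev addrC subrK. Qed.
Lemma dot_pmean (R : realType) (A : 'M[R]_3) : frob_dot (Id3 R) A = 0 -> pmean A = 0.
Proof. by rewrite /pmean => ->; rewrite mulr0. Qed.
Lemma pmean_dot (R : realType) (A : 'M[R]_3) : pmean A = 0 -> frob_dot (Id3 R) A = 0.
Proof. rewrite /pmean => /eqP; rewrite mulf_eq0 invr_eq0 pnatr_eq0 /= => /eqP //. Qed.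
Lemma rho_ge0 (R : realType) (A : 'M[R]_3) : 0 <= rho A.
Proof. exact: norm_ge0. Qed.
Lemma rho0 (R : realType) (A : 'M[R]_3) : rho A = 0 -> dev A = 0.
Proof. exact: norm0_eq. Qed.

Lemma symB (R : realType) (A B : 'M[R]_3) : sym3 A -> sym3 B -> sym3 (A - B).
Proof. by rewrite /sym3 => hA hB; rewrite linearB /= hA hB. Qed.
Lemma symD (R : realType) (A B : 'M[R]_3) : sym3 A -> sym3 B -> sym3 (A + B).
Proof. by rewrite /sym3 => hA hB; rewrite linearD /= hA hB. Qed.
Lemma symZ (R : realType) (c : R) (A : 'M[R]_3) : sym3 A -> sym3 (c *: A).
Proof. by rewrite /sym3 => hA; rewrite linearZ /= hA. Qed.
Lemma symI (R : realType) : sym3 (Id3 R).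
Proof. by rewrite /sym3 /Id3 tr_scalar_mx. Qed.
Lemma sym_dev (R : realType) (A : 'M[R]_3) : sym3 A -> sym3 (dev A).
Proof. by move=> h; rewrite /dev; apply: symB => //; apply: symZ; apply: symI. Qed.

Lemma ppart_pos (R : realType) (x : R) : 0 <= x -> ppart x = x.
Proof. by rewrite /ppart; case: lerP => // h1 h2; move: (le_lt_trans h2 h1); rewrite ltxx. Qed.
Lemma ppart_neg (R : realType) (x : R) : x <= 0 -> ppart x = 0.
Proof. by rewrite /ppart; case: lerP => // h1 h2; apply/eqP; rewrite eq_le h1 h2. Qed.
Lemma ppart_ge0 (R : realType) (x : R) : 0 <= ppart x.
Proof. by rewrite /ppart le_max lexx. Qed.
Lemma ppart_le (R : realType) (x y : R) : x <= y -> ppart x <= ppart y.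
Proof.
move=> h; case: (lerP 0 x) => hx.
  by rewrite !ppart_pos //; apply: le_trans h.
by rewrite (ppart_neg _ _ (ltW hx)) ppart_ge0.
Qed.

Lemma charP (R : realType) (sigtr sigma n : 'M[R]_3) (dl a b : R) :
  0 <= dl -> 0 < a -> subdiff_rho sigma n ->
  sigma = sigtr - dl *: (a *: n + b *: Id3 R) ->
  [/\ pmean sigma = pmean sigtr - dl * b,
      rho sigma = ppart (rho sigtr - dl * a) &
      dev sigma = (rho sigma / rho sigtr) *: dev sigtr].
Proof.
move=> hdl ha hn E.
have pn : pmean n = 0.
  case: hn => [[_ ->]|[_ [_ [h _]]]]; last exact: dot_pmean.
  by rewrite pmeanZ pmean_dev mulr0.
have dn : dev n = n by apply: dev0p.
have hp : pmean sigma = pmean sigtr - dl * b.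
  rewrite E pmeanB pmeanZ pmeanD !pmeanZ pn pmeanI; ring.
have hd : dev sigma = dev sigtr - (dl * a) *: n.
  by rewrite {1}E devB devZ devD !devZ devI dn scaler0 addr0 scalerA.
case: hn => [[hs hn]|[hs [_ [_ hn1]]]].
- set s := rho sigma in hs hn hd *.
  have hdt : dev sigtr = ((s + dl * a) / s) *: dev sigma.
    have -> : dev sigtr = dev sigma + (dl * a) *: n by rewrite hd subrK.
    rewrite hn scalerA -{1}[dev sigma]scale1r -scalerDl.
    congr (_ *: _); field; exact: lt0r_neq0.
  have hrt : rho sigtr = s + dl * a.
    rewrite /rho hdt normZ -/(rho sigma) -/s ger0_norm; last first.
      by apply: divr_ge0; [apply: addr_ge0; [exact: ltW| exact: mulr_ge0 hdl (ltW ha)] | exact: ltW].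
    field; exact: lt0r_neq0.
  have hrt0 : 0 < rho sigtr by rewrite hrt ltr_wpDr // mulr_ge0 // ltW.
  split => //.
    by rewrite hrt addrK ppart_pos // ltW.
  rewrite hdt scalerA hrt; rewrite -[LHS]scale1r; congr (_ *: _).
  field; rewrite (lt0r_neq0 hs) /=; apply: lt0r_neq0; by rewrite -hrt.
- have ds : dev sigma = 0 by apply: rho0.
  split => //; last by rewrite hs mul0r scale0r.
  rewrite hs ppart_neg // subr_le0.
  have : dev sigtr = (dl * a) *: n by apply/eqP; rewrite -subr_eq0 -hd ds.
  move=> hdt; rewrite /rho hdt normZ ger0_norm ?mulr_ge0 ?(ltW ha) //.
  by rewrite -[X in _ <= X]mulr1 ler_wpM2l // mulr_ge0 // ltW.
Qed.

Lemma cont_ed (R : realType) (f : R -> R) x :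
  (forall e, 0 < e -> exists2 d, 0 < d & forall y, `|x - y| < d -> `|f x - f y| < e) ->
  {for x, continuous f}.
Proof.
move=> h. apply/cvg_ballP => e e0.
have [d d0 hd] := h e e0.
apply: filterS (nbhsx_ballx x d d0) => y hy.
rewrite /ball /= in hy *; exact: hd.
Qed.

Lemma ppart_lip (R : realType) (x y : R) : `|ppart x - ppart y| <= `|x - y|.
Proof.
case: (lerP 0 x) => hx; case: (lerP 0 y) => hy.
- by rewrite !ppart_pos.
- rewrite ppart_pos // (ppart_neg _ _ (ltW hy)) subr0 ger0_norm //.
  apply: le_trans (ler_norm _); by rewrite lerDl oppr_ge0 ltW.
- rewrite (ppart_neg _ _ (ltW hx)) ppart_pos // sub0r normrN ger0_norm // distrC.
  apply: le_trans (ler_norm _); by rewrite lerDl oppr_ge0 ltW.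
- by rewrite (ppart_neg _ _ (ltW hx)) (ppart_neg _ _ (ltW hy)) subrr normr0.
Qed.

Lemma g_cont (R : realType) (K G eta etab xi c0 : R) (H : R -> R)
  (sigtr : 'M[R]_3) (epstr : R) :
  0 < xi -> 0 <= epstr -> loc_lipschitz_on (@nonneg_set R) H ->
  continuous (fun x => qtr K G eta etab xi c0 H sigtr epstr (ppart x)).
Proof.
move=> hxi he hlip x; apply: cont_ed => e e0.
set x0 := epstr + ppart x * xi.
have hx0 : @nonneg_set R x0 by rewrite /nonneg_set /= /x0 addr_ge0 // mulr_ge0 // ?ppart_ge0 ?ltW.
have [L [d [d0 hL]]] := hlip x0 hx0.
set M := `|Num.sqrt (2^-1)| * `|G * Num.sqrt 2| + `|eta * K * etab| + `|xi| * (`|L| * `|xi|).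
have M0 : 0 <= M by rewrite /M !addr_ge0 ?mulr_ge0.
have M1 : 0 < M + 1 by rewrite ltr_wpDl.
have xi1 : 0 < `|xi| + 1 by rewrite ltr_wpDl.
exists (Num.min (d / (`|xi| + 1)) (e / (M + 1))).
  by rewrite lt_min !divr_gt0.
move=> y; rewrite lt_min => /andP [hyd hye].
have hp := ppart_lip _ x y.
set Px := ppart (rho sigtr - ppart x * G * Num.sqrt 2).
set Py := ppart (rho sigtr - ppart y * G * Num.sqrt 2).
set uy := epstr + ppart y * xi.
have hD : qtr K G eta etab xi c0 H sigtr epstr (ppart x) - qtr K G eta etab xi c0 H sigtr epstr (ppart y)
   = Num.sqrt (2^-1) * (Px - Py) - eta * K * etab * (ppart x - ppart y) - xi * (H x0 - H uy).
  by rewrite /qtr /Px /Py /x0 /uy; ring.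
have h1 : `|Px - Py| <= `|G * Num.sqrt 2| * `|x - y|.
  apply: le_trans (ppart_lip _ _ _) _.
  have -> : rho sigtr - ppart x * G * Num.sqrt 2 - (rho sigtr - ppart y * G * Num.sqrt 2)
     = (G * Num.sqrt 2) * (ppart y - ppart x) by ring.
  by rewrite normrM ler_wpM2l // distrC.
have hux : `|x0 - uy| = `|xi| * `|ppart x - ppart y|.
  by rewrite -normrM; congr `|_|; rewrite /x0 /uy; ring.
have hxy : `|xi| * `|x - y| < d.
  move: hyd; rewrite ltr_pdivlMr // => h.
  apply: le_lt_trans h; rewrite mulrDr mulr1 mulrC lerDl //.
have hH : `|H x0 - H uy| <= `|L| * (`|xi| * `|x - y|).
  have huy : @nonneg_set R uy by rewrite /nonneg_set /= /uy addr_ge0 // mulr_ge0 // ?ppart_ge0 ?ltW.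
  have h2 : `|uy - x0| < d.
    rewrite distrC hux; apply: le_lt_trans hxy; by rewrite ler_wpM2l.
  have := hL x0 uy hx0 huy _ h2; rewrite subrr normr0 => /(_ d0) h3.
  apply: le_trans h3 _; apply: le_trans (ler_wpM2r (normr_ge0 _) (ler_norm L)) _.
  by rewrite ler_wpM2l // hux ler_wpM2l.
rewrite hD; apply: le_lt_trans (ler_normB _ _) _.
apply: le_lt_trans (lerD (ler_normB _ _) (lexx _)) _.
rewrite !normrM.
have hb : `|Num.sqrt (2^-1)| * `|Px - Py| + `|eta * K * etab| * `|ppart x - ppart y| + `|xi| * `|H x0 - H uy|
   <= M * `|x - y|.
  have -> : M * `|x - y| = `|Num.sqrt (2^-1)| * (`|G * Num.sqrt 2| * `|x - y|) + `|eta * K * etab| * `|x - y| + `|xi| * (`|L| * (`|xi| * `|x - y|)).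
    by rewrite /M; ring.
  by rewrite !lerD // ler_wpM2l.
rewrite -!normrM in hb *.
apply: le_lt_trans hb _.
move: hye; rewrite ltr_pdivlMr // => h.
apply: le_lt_trans h; rewrite mulrDr mulr1 mulrC lerDl //.
Qed.

Lemma q_dec (R : realType) (K G eta etab xi c0 : R) (H : R -> R)
  (sigtr : 'M[R]_3) (epstr : R) :
  0 < K -> 0 < G -> 0 < eta -> 0 < etab -> 0 < xi ->
  (forall x y, 0 <= x -> x <= y -> H x <= H y) -> 0 <= epstr ->
  forall a b, 0 <= a -> a < b ->
  qtr K G eta etab xi c0 H sigtr epstr b < qtr K G eta etab xi c0 H sigtr epstr a.
Proof.
move=> hK hG heta hetab hxi hH he a b ha hab.
rewrite -subr_lt0.
set Pa := ppart (rho sigtr - a * G * Num.sqrt 2).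
set Pb := ppart (rho sigtr - b * G * Num.sqrt 2).
set Ha := H (epstr + a * xi).
set Hb := H (epstr + b * xi).
have -> : qtr K G eta etab xi c0 H sigtr epstr b - qtr K G eta etab xi c0 H sigtr epstr a
  = Num.sqrt (2^-1) * (Pb - Pa) + eta * K * etab * (a - b) - xi * (Hb - Ha).
  by rewrite /qtr /Pa /Pb /Ha /Hb; ring.
have h1 : Num.sqrt (2^-1) * (Pb - Pa) <= 0.
  rewrite mulr_ge0_le0 ?sqrtr_ge0 // subr_le0 /Pa /Pb; apply: ppart_le.
  by rewrite lerB // ler_wpM2r ?sqrtr_ge0 // ler_wpM2r ?ltW.
have h2 : eta * K * etab * (a - b) < 0.
  by rewrite pmulr_rlt0 ?subr_lt0 // !mulr_gt0.
have h3 : 0 <= xi * (Hb - Ha).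
  apply: mulr_ge0; first exact: ltW.
  rewrite subr_ge0 /Ha /Hb; apply: hH.
    by rewrite addr_ge0 // mulr_ge0 // ltW.
  by rewrite lerD // ler_wpM2r ?ltW.
lra.
Qed.

Lemma q0 (R : realType) (K G eta etab xi c0 : R) (H : R -> R)
  (sigtr : 'M[R]_3) (epstr : R) :
  qtr K G eta etab xi c0 H sigtr epstr 0 = fyield eta xi c0 sigtr (H epstr).
Proof.
rewrite /qtr /fyield /fhat; rewrite !(mul0r, mulr0, subr0, addr0) ppart_pos ?rho_ge0 //.
Qed.

Lemma root_exists (R : realType) (K G eta etab xi c0 : R) (H : R -> R)
  (sigtr : 'M[R]_3) (epstr : R) :
  0 < K -> 0 < G -> 0 < eta -> 0 < etab -> 0 < xi -> 0 < c0 ->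
  (forall x, 0 <= x -> 0 <= H x) ->
  loc_lipschitz_on (@nonneg_set R) H -> 0 <= epstr ->
  0 < fyield eta xi c0 sigtr (H epstr) ->
  exists dl, 0 < dl /\ qtr K G eta etab xi c0 H sigtr epstr dl = 0.
Proof.
move=> hK hG heta hetab hxi hc0 hHp hlip he hf.
set g := fun x => qtr K G eta etab xi c0 H sigtr epstr (ppart x).
have hg0 : 0 < g 0 by rewrite /g ppart_pos // q0.
set b := (Num.sqrt (2^-1) * rho sigtr + `|eta * pmean sigtr|) / (eta * K * etab).
have hEKE : 0 < eta * K * etab by rewrite !mulr_gt0.
have hb0 : 0 <= b by rewrite /b divr_ge0 ?addr_ge0 ?mulr_ge0 ?sqrtr_ge0 ?rho_ge0 // ltW.
have hgb : g b < 0.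
  rewrite /g ppart_pos // /qtr.
  have h1 : ppart (rho sigtr - b * G * Num.sqrt 2) <= rho sigtr.
    rewrite -{2}(ppart_pos _ _ (rho_ge0 _ sigtr)); apply: ppart_le.
    by rewrite gerBl; apply: mulr_ge0; [apply: mulr_ge0; [exact: hb0|exact: ltW]|exact: sqrtr_ge0].
  have h2 : 0 <= H (epstr + b * xi) by apply: hHp; rewrite addr_ge0 // mulr_ge0 // ltW.
  have h3 : eta * (b * K * etab) = Num.sqrt (2^-1) * rho sigtr + `|eta * pmean sigtr|.
    rewrite /b; field; by rewrite !lt0r_neq0.
  have h4 : eta * pmean sigtr <= `|eta * pmean sigtr| by apply: ler_norm.
  have h5 : Num.sqrt (2^-1) * ppart (rho sigtr - b * G * Num.sqrt 2) <= Num.sqrt (2^-1) * rho sigtr.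
    by rewrite ler_wpM2l ?sqrtr_ge0.
  have h6 : 0 < xi * c0 by rewrite mulr_gt0.
  have h7 : 0 <= xi * H (epstr + b * xi) by rewrite mulr_ge0 // ltW.
  have -> : eta * (pmean sigtr - b * K * etab) = eta * pmean sigtr - eta * (b * K * etab) by ring.
  rewrite mulrDr; lra.
have := @IVT R g 0 b 0 hb0 (continuous_subspaceT (g_cont _ K G eta etab xi c0 H sigtr epstr hxi he hlip)).
rewrite ge_min le_max (ltW hgb) (ltW hg0) orbT /= => /(_ isT) [c].
rewrite in_itv /= => /andP [hc0' hcb] hgc.
exists c; split.
  rewrite lt_neqAle hc0' andbT; apply/eqP => hc; move: hgc; rewrite -hc => h.
  by move: hg0; rewrite h ltxx.
by move: hgc; rewrite /g ppart_pos.
Qed.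

Lemma dev_dev (R : realType) (A : 'M[R]_3) : dev (dev A) = dev A.
Proof. exact: dev0p (pmean_dev _ _). Qed.

Lemma norm0 (R : realType) : frob_norm (0 : 'M[R]_3) = 0.
Proof. by rewrite -(scale0r (0 : 'M[R]_3)) normZ normr0 mul0r. Qed.

Lemma P_exists (R : realType) (sigtr : 'M[R]_3) (dl a b : R) :
  sym3 sigtr -> 0 < dl -> 0 < a ->
  exists sigma n, sym3 sigma /\ subdiff_rho sigma n /\
    sigma = sigtr - dl *: (a *: n + b *: Id3 R).
Proof.
move=> hs hdl ha.
have hda : 0 < dl * a by rewrite mulr_gt0.
have hsym : forall n, sym3 n -> sym3 (sigtr - dl *: (a *: n + b *: Id3 R)).
  move=> n hn; apply: symB => //; apply: symZ; apply: symD; apply: symZ => //; exact: symI.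
case: (lerP (rho sigtr) (dl * a)) => hc.
- set n := (dl * a)^-1 *: dev sigtr.
  have hn : sym3 n by apply: symZ; apply: sym_dev.
  exists (sigtr - dl *: (a *: n + b *: Id3 R)), n; split; first exact: hsym.
  split => //.
  have hd : dev (sigtr - dl *: (a *: n + b *: Id3 R)) = 0.
    rewrite devB devZ devD !devZ devI scaler0 addr0 ?dev_dev !scalerA.
    by rewrite divff ?lt0r_neq0 // scale1r subrr.
  right; split; first by rewrite /rho hd norm0.
  split => //; split.
    by apply: pmean_dot; rewrite /n pmeanZ pmean_dev mulr0.
  rewrite /n normZ -/(rho sigtr) ger0_norm; last by rewrite invr_ge0 ltW.
  by rewrite mulrC ler_pdivrMr // mul1r.
- have hr : 0 < rho sigtr by apply: lt_trans hc.
  set n := (rho sigtr)^-1 *: dev sigtr.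
  have hn : sym3 n by apply: symZ; apply: sym_dev.
  exists (sigtr - dl *: (a *: n + b *: Id3 R)), n; split; first exact: hsym.
  split => //.
  set c := 1 - dl * a / rho sigtr.
  have hc0 : 0 < c by rewrite /c subr_gt0 ltr_pdivrMr // mul1r.
  have hd : dev (sigtr - dl *: (a *: n + b *: Id3 R)) = c *: dev sigtr.
    rewrite devB devZ devD !devZ devI scaler0 addr0 ?dev_dev !scalerA.
    by rewrite /c scalerBl scale1r.
  have hrs : rho (sigtr - dl *: (a *: n + b *: Id3 R)) = c * rho sigtr.
    by rewrite /rho hd normZ ger0_norm // ltW.
  left; split; first by rewrite hrs mulr_gt0.
  rewrite hrs hd scalerA /n; congr (_ *: _); field.
  by rewrite !lt0r_neq0.
Qed.

Lemma P_uniq (R : realType) (sigtr s1 s2 n1 n2 : 'M[R]_3) (dl a b : R) :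
  0 <= dl -> 0 < a -> subdiff_rho s1 n1 -> subdiff_rho s2 n2 ->
  s1 = sigtr - dl *: (a *: n1 + b *: Id3 R) ->
  s2 = sigtr - dl *: (a *: n2 + b *: Id3 R) -> s1 = s2.
Proof.
move=> hdl ha h1 h2 e1 e2.
have [p1 r1 d1] := charP _ _ _ _ _ _ _ hdl ha h1 e1.
have [p2 r2 d2] := charP _ _ _ _ _ _ _ hdl ha h2 e2.
by rewrite (decomp _ s1) (decomp _ s2) p1 p2 d1 d2 r1 r2.
Qed.

Lemma f_eq (R : realType) (K G eta etab xi c0 : R) (H : R -> R)
  (sigtr sigma n : 'M[R]_3) (epstr dl : R) :
  0 <= dl -> 0 < G -> subdiff_rho sigma n ->
  sigma = sigtr - dl *: ((G * Num.sqrt 2) *: n + (K * etab) *: Id3 R) ->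
  fyield eta xi c0 sigma (H (epstr + dl * xi)) = qtr K G eta etab xi c0 H sigtr epstr dl.
Proof.
move=> hdl hG hn E.
have ha : 0 < G * Num.sqrt 2 by rewrite mulr_gt0 // sqrtr_gt0.
have [p r _] := charP _ _ _ _ _ _ _ hdl ha hn E.
by rewrite /fyield /fhat p r /qtr !mulrA.
Qed.

Theorem theorem3 (R : realType) (K G eta etab xi c0 : R) (H : R -> R)
  (sigtr : 'M[R]_3) (epstr : R) :
  0 < K -> 0 < G -> 0 < eta -> 0 < etab -> 0 < xi -> 0 < c0 ->
  (forall x, 0 <= x -> 0 <= H x) ->
  (forall x y, 0 <= x -> x <= y -> H x <= H y) ->
  strongly_semismooth_nonneg H ->
  H 0 = 0 ->
  sym3 sigtr -> 0 <= epstr ->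
  0 < fyield eta xi c0 sigtr (H epstr) ->
  (* unique positive root of q_tr *)
  (exists dl, 0 < dl /\ qtr K G eta etab xi c0 H sigtr epstr dl = 0 /\
     forall dl', 0 < dl' -> qtr K G eta etab xi c0 H sigtr epstr dl' = 0 -> dl' = dl) /\
  (* (R) has a unique solution *)
  (exists p r e dl, probR K G eta etab xi c0 H sigtr epstr p r e dl /\
     forall p' r' e' dl', probR K G eta etab xi c0 H sigtr epstr p' r' e' dl' ->
       [/\ p' = p, r' = r, e' = e & dl' = dl]) /\
  (* (P) has a unique solution *)
  (exists sigma e dl, probP K G eta etab xi c0 H sigtr epstr sigma e dl /\
     forall sigma' e' dl', probP K G eta etab xi c0 H sigtr epstr sigma' e' dl' ->
       [/\ sigma' = sigma, e' = e & dl' = dl]) /\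
  (* (Q) has a unique solution *)
  (exists sigma e dl, probQ K G eta etab xi c0 H sigtr epstr sigma e dl /\
     forall sigma' e' dl', probQ K G eta etab xi c0 H sigtr epstr sigma' e' dl' ->
       [/\ sigma' = sigma, e' = e & dl' = dl]) /\
  (* the two cases, for the solution of (R) *)
  (forall p r e dl, probR K G eta etab xi c0 H sigtr epstr p r e dl ->
     let g0 := rho sigtr / (G * Num.sqrt 2) in
     (qtr K G eta etab xi c0 H sigtr epstr g0 < 0 -> (0 < dl /\ dl < g0) /\ 0 < r) /\
     (0 <= qtr K G eta etab xi c0 H sigtr epstr g0 -> g0 <= dl /\ r = 0)).
Proof.
move=> hK hG heta hetab hxi hc0 hHp hHm [hlip _] hH0 hsym he hf.
have hdec := q_dec _ K G eta etab xi c0 H sigtr epstr hK hG heta hetab hxi hHm he.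
have hq0 : 0 < qtr K G eta etab xi c0 H sigtr epstr 0 by rewrite q0.
have [dl [dl0 hq]] := root_exists _ K G eta etab xi c0 H sigtr epstr
  hK hG heta hetab hxi hc0 hHp hlip he hf.
have huniq : forall d, 0 <= d -> qtr K G eta etab xi c0 H sigtr epstr d = 0 -> d = dl.
  move=> d hd hqd; case: (ltgtP d dl) => // h.
  - by have := hdec d dl hd h; rewrite hqd hq ltxx.
  - by have := hdec dl d (ltW dl0) h; rewrite hqd hq ltxx.
have hG2 : 0 < G * Num.sqrt 2 by rewrite mulr_gt0 // sqrtr_gt0.
have [sigma [n [hs [hn E]]]] := P_exists _ sigtr dl (G * Num.sqrt 2) (K * etab) hsym dl0 hG2.
have hfs : fyield eta xi c0 sigma (H (epstr + dl * xi)) = 0.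
  by rewrite (f_eq _ K G eta etab xi c0 H sigtr sigma n epstr dl (ltW dl0) hG hn E).
split.
  exists dl; split => //; split => // d' hd'; apply: huniq; exact: ltW.
split.
  exists (pmean sigtr - dl * K * etab), (ppart (rho sigtr - dl * G * Num.sqrt 2)),
    (epstr + dl * xi), dl.
  split; first by do !split => //; exact: ltW.
  move=> p' r' e' d' [hd' [-> [-> [-> hf']]]].
  by rewrite (huniq d' hd' hf').
split.
  exists sigma, (epstr + dl * xi), dl; split.
    split; first exact: ltW.
    split => //; split; first by exists n.
    by split.
  move=> s' e' d' [hd' [hs' [[n' [hn' E']] [-> hf']]]].
  have hde : d' = dl.
    apply: huniq => //.
    by rewrite -(f_eq _ K G eta etab xi c0 H sigtr s' n' epstr d' hd' hG hn' E').
  rewrite hde in E' *; split => //.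
  exact: (P_uniq _ _ _ _ _ _ _ _ _ (ltW dl0) hG2 hn' hn E' E).
split.
  exists sigma, (epstr + dl * xi), dl; split.
    split => //; split; first by exists n.
    split => //; split; first exact: ltW.
    by rewrite hfs mulr0.
  move=> s' e' d' [hs' [[n' [hn' E']] [-> [hd' [hfle hmul]]]]].
  rewrite (f_eq _ K G eta etab xi c0 H sigtr s' n' epstr d' hd' hG hn' E') in hfle hmul.
  have hd0 : d' != 0.
    apply/eqP => h; move: hfle; rewrite h => h1.
    by move: (lt_le_trans hq0 h1); rewrite ltxx.
  have hqd : qtr K G eta etab xi c0 H sigtr epstr d' = 0.
    by move/eqP: hmul; rewrite mulf_eq0 (negbTE hd0) /= => /eqP.
  have hde : d' = dl by apply: huniq.
  rewrite hde in E' *; split => //.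
  exact: (P_uniq _ _ _ _ _ _ _ _ _ (ltW dl0) hG2 hn' hn E' E).
move=> p r e d [hd [hp [-> [he' hf']]]].
rewrite hp he' in hf'.
have hdd := huniq d hd hf'.
rewrite hdd.
move=> g0.
have hg00 : 0 <= g0 by rewrite /g0 divr_ge0 ?rho_ge0 // ltW.
split.
  move=> hlt.
  have hdg : dl < g0.
    rewrite ltNge; apply/negP; rewrite le_eqVlt => /orP [/eqP h|h].
      by move: hlt; rewrite h hq ltxx.
    have := hdec g0 dl hg00 h; rewrite hq => h2.
    by move: (lt_trans h2 hlt); rewrite ltxx.
  split => //.
  have : dl * (G * Num.sqrt 2) < rho sigtr by rewrite -ltr_pdivlMr.
  rewrite mulrA -subr_gt0 => h; by rewrite ppart_pos // ltW.
move=> hge.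
have hdg : g0 <= dl.
  rewrite leNgt; apply/negP => h.
  have := hdec dl g0 (ltW dl0) h; rewrite hq => h2.
  by move: (lt_le_trans h2 hge); rewrite ltxx.
split => //.
have : rho sigtr <= dl * (G * Num.sqrt 2) by rewrite -ler_pdivrMr.
rewrite mulrA -subr_le0 => h; by rewrite ppart_neg.
Qed.
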